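(* Let $0<\alpha<1$, $\sigma>0$, $N_1$ a positive integer, $h=\sigma^2\alpha^2$, $T=\sigma\alpha\sqrt{N_1}$, $\kappa=\frac\alpha{1-\alpha}$, and let $n\ge1$ be an integer. For $x\in(0,1]$ and complex $u\notin(-\infty,0]$ let $$f(u,x)=\frac{\sin(\alpha\pi)}{\alpha\pi}\frac{1}{2\sqrt u}\frac{xe^{\sqrt u-T}}{e^{\frac1\alpha(\sqrt u-T)}+x}$$ (principal branch of $\sqrt u$). Let $u^*=\frac{1+(1-2\alpha)\sqrt{4\alpha-4\alpha^2+1}}{2(1-\alpha)^2}$, $\gamma=\alpha\log\!\Big(\frac{\frac1\kappa\sqrt{u^*}+1}{\sqrt{u^*}-1}\Big)+\sqrt{u^*}$, $x^*=e^{\frac1\alpha(\gamma-T)}$, $M_0=2\max\left\{\frac{\sigma^2}{4},1+\mathrm{ceil}\!\left(\frac{9\pi^2}{\sigma^2}\right),2\,\mathrm{ceil}\!\left[\left(1+\sqrt{\pi/\sigma}\right)^4\right]\right\}$, and $\Upsilon=\{x\in[x^*,1]:(T+\alpha\log x)^2-\alpha^2\pi^2>M_0h\}$. For $x\in\Upsilon$ put $a=2\alpha\pi(T+\alpha\log x)$ and $u_0=(T+\alpha\log x)^2-\alpha^2\pi^2-ia$. Let $N_0>0$ be a fixed sufficiently large number, $\rho_0=\frac12\min\{\alpha^2\pi^2,2\pi\alpha\gamma,h/N_0\}$, and for $0<\rho\le\rho_0$ let $C^{\pm}_\rho=\{z=u_0+\rho e^{i\theta}:\theta:0\to\pm2\pi\}$.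 Then for arbitrary $\rho\in(0,\rho_0]$ it holds uniformly for $x\in\Upsilon$ that $$\left|\int_{C^{\pm}_\rho}f(u,x)e^{-i\frac{2n\pi}{h}u}\,\mathrm{d}u\right|=e^{(\rho-a)\frac{2n\pi}{h}}x^\alpha\,\mathcal{O}(1)$$ as $T\to+\infty$, where the constant in $\mathcal{O}(1)$ is independent of $x$, $h$, $\alpha$, $\sigma$, $\rho$ and $T$.
   Context: $\mathrm{ceil}(y)$ is the least integer $\ge y$. $u_0$ is a simple pole of $u\mapsto f(u,x)$. *)

(* Defs.v *)
From Stdlib Require Import Reals.
From Coquelicot Require Import Coquelicot.
Open Scope R_scope.

(* ceil y : least integer >= y  (up z is the least integer > z) *)
Definition Rceil (y : R) : R := - IZR (up (- y) - 1).

Definition Cexp (z : C) : C :=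
  (exp (Re z) * cos (Im z), exp (Re z) * sin (Im z)).

(* principal branch of the square root, valid for z outside (-oo,0]:
   the root with positive real part *)
Definition Csqrt (z : C) : C :=
  let r := sqrt ((Cmod z + Re z) / 2) in (r, Im z / (2 * r)).

Definition fA2 (alpha T : R) (u : C) (x : R) : C :=
  (RtoC (sin (alpha * PI) / (alpha * PI)) * / (2 * Csqrt u)
   * (RtoC x * Cexp (Csqrt u - RtoC T))
   / (Cexp ((Csqrt u - RtoC T) / RtoC alpha) + RtoC x))%C.

Definition hA2 (alpha sigma : R) : R := sigma ^ 2 * alpha ^ 2.
Definition TA2 (alpha sigma : R) (N1 : nat) : R := sigma * alpha * sqrt (INR N1).
Definition kappaA2 (alpha : R) : R := alpha / (1 - alpha).
Definition ustarA2 (alpha : R) : R :=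
  (1 + (1 - 2 * alpha) * sqrt (4 * alpha - 4 * alpha ^ 2 + 1)) / (2 * (1 - alpha) ^ 2).
Definition gammaA2 (alpha : R) : R :=
  alpha * ln ((/ kappaA2 alpha * sqrt (ustarA2 alpha) + 1) / (sqrt (ustarA2 alpha) - 1))
  + sqrt (ustarA2 alpha).
Definition xstarA2 (alpha T : R) : R := exp (/ alpha * (gammaA2 alpha - T)).
Definition M0A2 (sigma : R) : R :=
  2 * Rmax (sigma ^ 2 / 4)
           (Rmax (1 + Rceil (9 * PI ^ 2 / sigma ^ 2))
                 (2 * Rceil ((1 + sqrt (PI / sigma)) ^ 4))).

Definition UpsilonA2 (alpha sigma : R) (N1 : nat) (x : R) : Prop :=
  let T := TA2 alpha sigma N1 in
  xstarA2 alpha T <= x <= 1 /\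
  (T + alpha * ln x) ^ 2 - alpha ^ 2 * PI ^ 2 > M0A2 sigma * hA2 alpha sigma.

Definition aA2 (alpha T x : R) : R := 2 * alpha * PI * (T + alpha * ln x).
Definition u0A2 (alpha T x : R) : C :=
  ((T + alpha * ln x) ^ 2 - alpha ^ 2 * PI ^ 2, - aA2 alpha T x).

Definition rho0A2 (alpha sigma N0 : R) : R :=
  / 2 * Rmin (alpha ^ 2 * PI ^ 2)
             (Rmin (2 * PI * alpha * gammaA2 alpha) (hA2 alpha sigma / N0)).

(* contour integral over C^{s}_rho (s = 1 : theta from 0 to 2 pi,
   s = -1 : theta from 0 to -2 pi) of F, parametrised by
   z(theta) = u0 + rho e^{i theta}, dz = i rho e^{i theta} dtheta *)
Definition circ_int (F : C -> C) (u0 : C) (rho s : R) : C :=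
  RInt (V := C_R_CompleteNormedModule)
    (fun th : R => (F (u0 + RtoC rho * Cexp (0, th)) * ((0, rho) * Cexp (0, th)))%C)
    0 (s * (2 * PI)).

(* Main.v *)
Require Import Defs.
From Stdlib Require Import Reals Lra.
From Coquelicot Require Import Coquelicot.
Open Scope R_scope.

Definition CC (F : R -> C) (t : R) :=
  continuous (fun s => fst (F s)) t /\ continuous (fun s => snd (F s)) t.

Lemma rc_plus (f g : R -> R) t : continuous f t -> continuous g t -> continuous (fun s => f s + g s) t.
Proof. intros; apply (continuous_plus f g); auto. Qed.
Lemma rc_mult (f g : R -> R) t : continuous f t -> continuous g t -> continuous (fun s => f s * g s) t.
Proof. intros; apply (continuous_mult f g); auto. Qed.
Lemma rc_opp (f : R -> R) t : continuous f t -> continuous (fun s => - f s) t.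
Proof. intros; apply (continuous_opp f); auto. Qed.
Lemma rc_const (c : R) t : continuous (fun _ : R => c) t.
Proof. apply continuous_const. Qed.
Lemma rc_id t : continuous (fun s : R => s) t.
Proof. apply continuous_id. Qed.
Lemma rc_inv (f : R -> R) t : continuous f t -> f t <> 0 -> continuous (fun s => / f s) t.
Proof. intros; apply continuous_Rinv_comp; auto. Qed.
Lemma rc_pow (f : R -> R) t n : continuous f t -> continuous (fun s => f s ^ n) t.
Proof. intros H; induction n; simpl. apply rc_const. apply rc_mult; auto. Qed.

Lemma CC_cont (F : R -> C) t : CC F t -> @continuous R_UniformSpace C_R_CompleteNormedModule F t.
Proof.
  intros [H1 H2].
  apply filterlim_locally. intros eps.
  apply filterlim_locally with (eps := eps) in H1.
  apply filterlim_locally with (eps := eps) in H2.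
  generalize (filter_and _ _ H1 H2). apply filter_imp.
  intros s [A B]. split; assumption.
Qed.

Lemma CC_const c t : CC (fun _ => c) t.
Proof. split; apply rc_const. Qed.
Lemma CC_plus F G t : CC F t -> CC G t -> CC (fun s => (F s + G s)%C) t.
Proof. intros [] []; split; simpl; apply rc_plus; auto. Qed.
Lemma CC_opp F t : CC F t -> CC (fun s => (- F s)%C) t.
Proof. intros [] ; split; simpl; apply rc_opp; auto. Qed.
Lemma CC_minus F G t : CC F t -> CC G t -> CC (fun s => (F s - G s)%C) t.
Proof. intros. apply CC_plus; auto. apply CC_opp; auto. Qed.
Lemma CC_mult F G t : CC F t -> CC G t -> CC (fun s => (F s * G s)%C) t.
Proof. intros [] []; split; simpl.
  apply rc_plus; [apply rc_mult|apply rc_opp, rc_mult]; auto.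
  apply rc_plus; apply rc_mult; auto. Qed.
Lemma CC_inv F t : CC F t -> F t <> 0%C -> CC (fun s => (/ F s)%C) t.
Proof. intros [] Hn.
  assert (Hd : fst (F t) ^ 2 + snd (F t) ^ 2 <> 0).
  { intro E. apply Hn. destruct (F t) as [a b]; simpl in *.
    assert (a = 0) by nra. assert (b = 0) by nra. subst; reflexivity. }
  split; unfold Cinv; cbn [fst snd]; (apply rc_mult; [ |apply rc_inv; auto; apply rc_plus; apply rc_pow; auto]).
  auto. apply rc_opp; auto. Qed.
Lemma CC_div F G t : CC F t -> CC G t -> G t <> 0%C -> CC (fun s => (F s / G s)%C) t.
Proof. intros. unfold Cdiv. apply CC_mult; auto. apply CC_inv; auto. Qed.
Lemma CC_exp F t : CC F t -> CC (fun s => Cexp (F s)) t.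
Proof. intros [H1 H2]; split; unfold Cexp, Re, Im; cbn [fst snd]; apply rc_mult.
  apply continuous_exp_comp; exact H1. apply continuous_cos_comp; exact H2.
  apply continuous_exp_comp; exact H1. apply continuous_sin_comp; exact H2. Qed.
Lemma csq_pos a b : b <> 0 -> 0 < sqrt (a^2+b^2) + a.
Proof. intros Hb.
  assert (sqrt (a^2+b^2) > Rabs a).
  { rewrite <- sqrt_Rsqr_abs. apply sqrt_lt_1_alt. split. apply Rle_0_sqr.
    unfold Rsqr. assert (0 < b*b) by (apply Rsqr_pos_lt; auto). nra. }
  generalize (Rle_abs (-a)). rewrite Rabs_Ropp. lra. Qed.

Lemma CC_sqrt F t : CC F t -> snd (F t) <> 0 -> CC (fun s => Csqrt (F s)) t.
Proof. intros [H1 H2] Hn.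
  assert (Hc : continuous (fun s => sqrt ((Cmod (F s) + fst (F s)) / 2)) t).
  { apply continuous_sqrt_comp. unfold Rdiv. apply rc_mult; [|apply rc_const].
    apply rc_plus; auto. unfold Cmod. apply continuous_sqrt_comp.
    apply rc_plus; apply rc_pow; auto. }
  assert (Hp : 0 < (Cmod (F t) + fst (F t)) / 2).
  { unfold Cmod. destruct (F t) as [a b]; cbn [fst snd] in *.
    generalize (csq_pos a b Hn); lra. }
  split; unfold Csqrt; simpl. auto.
  unfold Rdiv. apply rc_mult; auto. apply rc_inv. apply rc_mult; auto. apply rc_const.
  apply Rmult_integral_contrapositive; split. lra. apply Rgt_not_eq, sqrt_lt_R0; auto.
Qed.
Lemma sin_lower y : 0 <= y <= 1 -> y - y^3/6 <= sin y.
Proof. intros Hy.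
  assert (HP: 1 <= PI) by (generalize PI2_3_2; lra).
  destruct (SIN y) as [H _]; try lra.
  unfold sin_lb, sin_approx, sin_term in H. simpl in H.
  assert (y*y <= 1) by nra.
  assert (0<= y^5) by (apply pow_le; lra).
  assert (y^7 <= y^5) by (replace (y^7) with (y^5*(y*y)) by ring; nra).
  assert (y^3 = y*(y*(y*1))) by ring.
  assert (y^5 = y * (y * (y * (y * (y * 1))))) by ring.
  assert (y^7 = y * (y * (y * (y * (y * (y * (y * 1))))))) by ring.
  lra.
Qed.
Lemma one_m_cos b : Rabs b <= 1/10 -> 49/100 * b^2 <= 1 - cos b.
Proof. intros Hb.
  assert (E: cos b = cos (2 * (b/2))) by (f_equal; field). rewrite E, cos_2a_sin.
  set (y := Rabs b / 2).
  assert (Hs: sin (b/2) * sin (b/2) = sin y * sin y).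
  { unfold y. unfold Rabs; destruct Rcase_abs.
    replace (- b / 2) with (- (b/2)) by field. rewrite sin_neg. ring. reflexivity. }
  replace (1 - (1 - 2 * sin (b/2) * sin (b/2))) with (2 * (sin (b/2) * sin (b/2))) by ring.
  rewrite Hs.
  assert (Hy: 0 <= y <= 1/20) by (unfold y; generalize (Rabs_pos b); lra).
  generalize (sin_lower y ltac:(lra)). intros Hl.
  assert (y^3 <= y/400) by (replace (y^3) with (y*(y*y)) by ring; nra).
  assert (99/100*y <= sin y) by lra.
  assert (b^2 = 4*y^2).
  { unfold y. rewrite <- (pow2_abs b). field. }
  nra.
Qed.

Lemma exp_m1_sq a : Rabs a <= 1/10 -> a^2/2 <= (exp a - 1)^2.
Proof. intros Ha.
  generalize (exp_ineq1_le a) (exp_ineq1_le (-a)) (exp_pos a); intros H1 H2 H3.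
  assert (Hm: exp a * exp (-a) = 1) by (rewrite <- exp_plus; replace (a + -a) with 0 by ring; apply exp_0).
  destruct (Rle_dec 0 a).
  - nra.
  - assert (Ha': -1/10 <= a < 0) by (unfold Rabs in Ha; destruct Rcase_abs; lra).
    assert (exp a * (1 - a) <= 1) by nra.
    assert (1 - exp a >= - a / (11/10)).
    { assert (exp a <= 1 / (1 - a)). { apply (Rmult_le_reg_r (1-a)). lra. field_simplify; lra. }
      assert (1/(1-a) <= 1 + a/(11/10)). { apply (Rmult_le_reg_r (1-a)). lra. field_simplify; nra. }
      lra. }
    nra.
Qed.

Lemma key_lower a b : Rabs a <= 1/10 -> Rabs b <= 1/10 ->
  (a^2 + b^2)/4 <= (1 - exp a * cos b)^2 + (exp a * sin b)^2.
Proof. intros Ha Hb.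
  generalize (one_m_cos b Hb) (exp_m1_sq a Ha) (exp_ineq1_le a) (sin2_cos2 b); intros H1 H2 H3 H4.
  unfold Rsqr in H4.
  assert (Ha' : -1/10 <= a) by (unfold Rabs in Ha; destruct Rcase_abs; lra).
  replace ((1 - exp a * cos b)^2 + (exp a * sin b)^2) with
    ((exp a - 1)^2 + 2 * exp a * (1 - cos b)).
  2:{ transitivity (1 - 2 * exp a * cos b + exp a ^2 * (sin b * sin b + cos b * cos b)).
      rewrite H4; ring. ring. }
  assert (0 <= b^2) by apply pow2_ge_0.
  nra.
Qed.
Lemma Csqrt_prop a b : b <> 0 ->
  0 < fst (Csqrt (a,b)) /\
  fst (Csqrt (a,b)) ^2 - snd (Csqrt (a,b)) ^2 = a /\
  2 * fst (Csqrt (a,b)) * snd (Csqrt (a,b)) = b.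
Proof. intros Hb. unfold Csqrt, Cmod, Re, Im; cbn [fst snd].
  set (S := sqrt (a^2+b^2)).
  assert (HS : S * S = a^2+b^2) by (unfold S; apply sqrt_sqrt; nra).
  assert (HP : 0 < S + a) by (apply csq_pos; auto).
  set (r := sqrt ((S + a)/2)).
  assert (Hr2 : r * r = (S+a)/2) by (unfold r; apply sqrt_sqrt; lra).
  assert (Hr : 0 < r) by (unfold r; apply sqrt_lt_R0; lra).
  split; auto. split.
  - assert (E : r^2 - (b/(2*r))^2 = (4*(r*r)*(r*r) - b^2)/(4*(r*r))) by (field; lra).
    rewrite E, Hr2. field_simplify; [|lra].
    replace (S^2) with (S*S) by ring. rewrite HS. field. lra.
  - field. lra.
Qed.
Lemma Cmod_Cexp w : Cmod (Cexp w) = exp (fst w).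
Proof. unfold Cmod, Cexp, Re, Im; cbn [fst snd].
  set (e := exp (fst w)).
  assert (E : (e * cos (snd w)) ^ 2 + (e * sin (snd w)) ^ 2 = e ^ 2).
  { generalize (sin2_cos2 (snd w)); unfold Rsqr; intros H.
    transitivity (e^2 * (sin (snd w) * sin (snd w) + cos (snd w) * cos (snd w))). ring.
    rewrite H; ring. }
  rewrite E. apply sqrt_pow2. unfold e; left; apply exp_pos. Qed.

Lemma Cdiv_RtoC w a : a <> 0 -> (w / RtoC a)%C = (fst w / a, snd w / a).
Proof. intros Ha. destruct w as [w1 w2]. unfold Cdiv, Cinv, Cmult, RtoC; cbn [fst snd].
  f_equal; field; auto. Qed.

Lemma Cmod_fst a b : Rabs a <= Cmod (a,b).
Proof. generalize (Rmax_Cmod (a,b)); cbn [fst snd]; generalize (Rmax_l (Rabs a) (Rabs b)); lra. Qed.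
Lemma Cmod_snd a b : Rabs b <= Cmod (a,b).
Proof. generalize (Rmax_Cmod (a,b)); cbn [fst snd]; generalize (Rmax_r (Rabs a) (Rabs b)); lra. Qed.
Lemma Cmod_sq a b : Cmod (a,b) ^ 2 = a^2 + b^2.
Proof. unfold Cmod; cbn [fst snd]. rewrite pow2_sqrt; auto. nra. Qed.

Lemma sq_le a b : 0 <= b -> a^2 <= b^2 -> a <= b.
Proof. intros Hb H. destruct (Rle_dec a b); auto. nra. Qed.

Lemma exp_mono a b : a <= b -> exp a <= exp b.
Proof. intros [H|H]. left; apply exp_increasing; auto. subst; lra. Qed.

Lemma pointwise (al T x rho c th : R) :
  0 < al < 1 -> 0 < x -> al * PI < T + al * ln x -> 0 < rho ->
  rho <= al * (T + al * ln x) / 10 -> 0 < c ->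
  let u := (u0A2 al T x + RtoC rho * Cexp (0, th))%C in
  snd u <> 0 /\ Csqrt u <> 0%C /\
  (Cexp ((Csqrt u - RtoC T) / RtoC al) + RtoC x)%C <> 0%C /\
  Cmod ((fA2 al T u x * Cexp (RtoC (- c) * (0, 1) * u)) * ((0, rho) * Cexp (0, th)))%C
   <= 3 * Rpower x al * exp ((rho - aA2 al T x) * c).
Proof.
  intros Hal Hx Hp Hr Hr2 Hc u.
  assert (HPI : 3 < PI) by (generalize PI2_3_2; lra).
  set (p := T + al * ln x) in *.
  set (q := al * PI).
  assert (Hq : 0 < q) by (unfold q; nra).
  assert (Hp0 : 0 < p) by nra.
  set (u1 := p^2 - q^2 + rho * cos th).
  set (u2 := - (2*p*q) + rho * sin th).
  assert (Hu : u = (u1, u2)).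
  { unfold u, u0A2, aA2, Cexp, RtoC, Cplus, Cmult, Re, Im; cbn [fst snd]. rewrite exp_0.
    unfold u1, u2, p, q. f_equal; ring. }
  clearbody u. subst u. unfold fA2.
  assert (Hu2 : u2 < 0).
  { unfold u2. generalize (SIN_bound th); intros. assert (rho < 2*p*q) by (unfold q; nra). nra. }
  generalize (Csqrt_prop u1 u2 ltac:(lra)).
  destruct (Csqrt (u1,u2)) as [z1 z2] eqn:Ez. cbn [fst snd]. intros [Hz1 [Hzr Hzi]].
  set (d := Cmod (z1 - p, z2 + q)).
  set (m := Cmod (z1 + p, z2 - q)).
  set (Z := Cmod (z1, z2)).
  assert (Hdm2 : (d*m)^2 = rho^2).
  { replace ((d*m)^2) with (d^2*m^2) by ring. unfold d, m. rewrite !Cmod_sq.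
    assert (E1 : z1^2 - z2^2 - p^2 + q^2 = rho * cos th) by (unfold u1 in Hzr; lra).
    assert (E2 : 2*z1*z2 + 2*p*q = rho * sin th) by (unfold u2 in Hzi; lra).
    transitivity ((z1^2 - z2^2 - p^2 + q^2)^2 + (2*z1*z2 + 2*p*q)^2). ring.
    rewrite E1, E2. generalize (sin2_cos2 th); unfold Rsqr; intros H.
    transitivity (rho^2 * (sin th * sin th + cos th * cos th)). ring. rewrite H; ring. }
  assert (Hd0 : 0 <= d) by apply Cmod_ge_0.
  assert (Hm0 : 0 <= m) by apply Cmod_ge_0.
  assert (HZ0 : 0 <= Z) by apply Cmod_ge_0.
  assert (Hdm : d * m = rho).
  { assert (d*m <= rho) by (apply sq_le; lra). assert (rho <= d*m) by (apply sq_le; nra). lra. }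
  assert (Hm1 : z1 + p <= m) by (generalize (Cmod_fst (z1+p) (z2-q)); fold m; unfold Rabs; destruct Rcase_abs; lra).
  assert (Hdp : d <= rho / p).
  { apply (Rmult_le_reg_r p); auto. unfold Rdiv. rewrite Rmult_assoc, Rinv_l, Rmult_1_r by lra. nra. }
  assert (Hdal : d <= al / 10).
  { apply Rle_trans with (rho/p); auto. apply (Rmult_le_reg_r p); auto. unfold Rdiv.
    rewrite Rmult_assoc, Rinv_l, Rmult_1_r by lra. lra. }
  assert (Hd1 : Rabs (z1 - p) <= d) by apply Cmod_fst.
  assert (Hd2 : Rabs (z2 + q) <= d) by apply Cmod_snd.
  assert (Hpos : 0 < d).
  { destruct Hd0; auto. rewrite <- H in Hdm. lra. }
  set (w1 := (z1 - p)/al). set (w2 := (z2 + q)/al).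
  assert (HD : (Cexp (((z1,z2) - RtoC T) / RtoC al) + RtoC x)%C =
     (x * (1 - exp w1 * cos w2), x * (- (exp w1 * sin w2)))).
  { rewrite Cdiv_RtoC by lra. unfold Cminus, Cplus, Copp, RtoC, Cexp, Re, Im; cbn [fst snd].
    replace ((z1 + - T) / al) with (ln x + w1) by (unfold w1, p; field; lra).
    replace ((z2 + - 0) / al) with (w2 - PI) by (unfold w2, q; field; lra).
    rewrite exp_plus, exp_ln by auto. rewrite cos_minus, sin_minus, cos_PI, sin_PI.
    f_equal; ring. }
  assert (Hw1 : Rabs w1 <= 1/10).
  { unfold w1, Rdiv. rewrite Rabs_mult, Rabs_inv, (Rabs_right al) by lra.
    apply (Rmult_le_reg_r al). lra. rewrite Rmult_assoc, Rinv_l, Rmult_1_r by lra. lra. }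
  assert (Hw2 : Rabs w2 <= 1/10).
  { unfold w2, Rdiv. rewrite Rabs_mult, Rabs_inv, (Rabs_right al) by lra.
    apply (Rmult_le_reg_r al). lra. rewrite Rmult_assoc, Rinv_l, Rmult_1_r by lra. lra. }
  assert (Hw : w1^2 + w2^2 = d^2 / al^2).
  { unfold d. rewrite Cmod_sq. unfold w1, w2. field. lra. }
  set (CD := Cmod (x * (1 - exp w1 * cos w2), x * (- (exp w1 * sin w2)))).
  assert (HCD : x * d / (2 * al) <= CD).
  { apply sq_le. apply Cmod_ge_0. unfold CD. rewrite Cmod_sq.
    generalize (key_lower w1 w2 Hw1 Hw2). rewrite Hw. intros K.
    replace ((x * d / (2 * al))^2) with (x^2 * (d^2/al^2/4)) by (field; lra).
    replace ((x * (1 - exp w1 * cos w2)) ^ 2 + (x * - (exp w1 * sin w2)) ^ 2) with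
      (x^2 * ((1 - exp w1 * cos w2) ^ 2 + (exp w1 * sin w2) ^ 2)) by ring.
    apply Rmult_le_compat_l. nra. lra. }
  assert (HCDp : 0 < CD).
  { apply Rlt_le_trans with (x * d / (2*al)); auto. apply Rdiv_lt_0_compat; nra. }
  rewrite HD.
  assert (HDn : (x * (1 - exp w1 * cos w2), x * - (exp w1 * sin w2)) <> RtoC 0).
  { intro E. unfold CD in HCDp. rewrite E, Cmod_0 in HCDp. lra. }
  assert (Hzn : (z1, z2) <> RtoC 0).
  { intro E. injection E. lra. }
  split. cbn [snd]. lra.
  split. auto.
  split. auto.
  assert (H2z : (RtoC 2 * (z1,z2))%C <> RtoC 0).
  { apply Cmult_neq_0; auto. intro E; injection E; lra. }
  rewrite !Cmod_mult, Cmod_div, !Cmod_mult, Cmod_inv, Cmod_mult, !Cmod_R, !Cmod_Cexp by auto.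
  fold CD. fold Z.
  assert (F1 : fst ((z1, z2) - RtoC T)%C = z1 - T) by (simpl; ring).
  assert (F2 : fst (RtoC (-c) * (0,1) * (u1,u2))%C = c * u2) by (simpl; ring).
  assert (F3 : Cmod (0,rho) = rho).
  { unfold Cmod; cbn [fst snd]. replace (0^2 + rho^2) with (rho^2) by ring. apply sqrt_pow2; lra. }
  rewrite F1, F2, F3. cbn [fst]. rewrite exp_0, Rmult_1_r.
  rewrite (Rabs_right 2) by lra. rewrite (Rabs_right x) by lra.
  set (S := Rabs (sin (al * PI) / (al * PI))).
  assert (HS : S * (al * PI) <= 1).
  { unfold S. rewrite Rabs_div by nra. rewrite (Rabs_right (al*PI)) by nra.
    replace (Rabs (sin (al * PI)) / (al * PI) * (al * PI)) with (Rabs (sin (al*PI))) by (field; nra).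
    apply Rabs_le. apply SIN_bound. }
  assert (HS0 : 0 <= S) by apply Rabs_pos.
  set (X := Rpower x al).
  assert (HX : 0 < X) by (unfold X, Rpower; apply exp_pos).
  set (E := exp (z1 - T)).
  assert (HE : E <= 10/9 * X).
  { unfold E, X, Rpower. replace (z1 - T) with (al * ln x + (z1 - p)) by (unfold p; ring).
    rewrite exp_plus. rewrite (Rmult_comm (10/9)). apply Rmult_le_compat_l. left; apply exp_pos.
    assert (Hz : z1 - p <= 1/10) by (generalize (Rle_abs (z1 - p)); lra).
    assert (exp (z1 - p) <= exp (1/10)) by (apply exp_mono; auto).
    assert (exp (1/10) * exp (-(1/10)) = 1) by (rewrite <- exp_plus; replace (1/10 + - (1/10)) with 0 by ring; apply exp_0).
    generalize (exp_ineq1_le (-(1/10))) (exp_pos (1/10)). nra. }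
  assert (HE0 : 0 < E) by apply exp_pos.
  set (G := exp (c * u2)).
  assert (HG : G <= exp ((rho - aA2 al T x) * c)).
  { apply exp_mono. unfold aA2. fold p.
    assert (u2 <= rho - 2*al*PI*p) by (unfold u2, q; generalize (SIN_bound th); nra).
    rewrite (Rmult_comm _ c). apply Rmult_le_compat_l; lra. }
  assert (HG0 : 0 < G) by apply exp_pos.
  assert (HZ1 : z1 <= Z) by (generalize (Cmod_fst z1 z2); fold Z; generalize (Rle_abs z1); lra).
  assert (HdZ : d <= Z).
  { generalize (Rabs_maj2 (z1 - p)); intros. assert (3 * al < p) by nra. lra. }
  assert (Hm4 : m <= 4 * Z).
  { apply sq_le. lra. unfold m. rewrite Cmod_sq.
    assert (Z^2 = z1^2 + z2^2) by (unfold Z; apply Cmod_sq).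
    assert (d^2 = (z1-p)^2 + (z2+q)^2) by (unfold d; apply Cmod_sq).
    assert (d^2 <= Z^2) by (apply pow_incr; lra).
    assert ((z1+p)^2 + (z2-q)^2 <= 8*(z1^2+z2^2) + 2*((z1-p)^2+(z2+q)^2)).
    { assert (0 <= (3*z1 - p)^2) by apply pow2_ge_0. assert (0 <= (3*z2+q)^2) by apply pow2_ge_0.
      assert (8*(z1^2+z2^2) + 2*((z1-p)^2+(z2+q)^2) - ((z1+p)^2 + (z2-q)^2) = (3*z1 - p)^2 + (3*z2+q)^2) by ring.
      lra. }
    replace ((4*Z)^2) with (16 * Z^2) by ring. generalize (pow2_ge_0 Z). lra. }
  assert (HZp : 0 < Z) by lra.
  replace (S * / (2 * Z) * (x * E) / CD * G * rho) with
    ((S * (al * PI)) * ((x * d / (2 * al)) / CD) * (E * G * m / (PI * Z))).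
  2:{ rewrite <- Hdm. field. repeat split; nra. }
  assert (HB : (x * d / (2 * al)) / CD <= 1).
  { apply (Rmult_le_reg_r CD); auto.
    replace ((x * d / (2 * al)) / CD * CD) with (x * d / (2 * al)) by (field; lra). lra. }
  assert (HB0 : 0 <= (x * d / (2 * al)) / CD) by (apply Rdiv_le_0_compat; [apply Rdiv_le_0_compat|]; nra).
  assert (HC : E * G * m / (PI * Z) <= 3 * X * exp ((rho - aA2 al T x) * c)).
  { apply (Rmult_le_reg_r (PI * Z)). nra.
    replace (E * G * m / (PI * Z) * (PI * Z)) with (E * G * m) by (field; nra).
    assert (E * G * m <= (10/9 * X) * exp ((rho - aA2 al T x) * c) * (4 * Z)).
    { apply Rmult_le_compat; try apply Rmult_le_compat; nra. }
    assert (0 < exp ((rho - aA2 al T x) * c)) by apply exp_pos.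
    assert (HK : 0 <= X * exp ((rho - aA2 al T x) * c) * Z) by (apply Rmult_le_pos; [apply Rmult_le_pos|]; lra).
    assert (40/9 * (X * exp ((rho - aA2 al T x) * c) * Z) <= 3 * PI * (X * exp ((rho - aA2 al T x) * c) * Z)).
    { apply Rmult_le_compat_r; lra. }
    nra. }
  assert (HC0 : 0 <= E * G * m / (PI * Z)).
  { apply Rdiv_le_0_compat. apply Rmult_le_pos; [apply Rmult_le_pos|]; lra. nra. }
  apply Rle_trans with (E * G * m / (PI * Z)); auto.
  assert (0 <= S * (al * PI)) by (apply Rmult_le_pos; nra).
  assert ((S * (al * PI)) * ((x * d / (2 * al)) / CD) <= 1) by nra.
  nra.
Qed.

Lemma ustar_lt9 a : 0 < a < 1 -> ustarA2 a < 9.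
Proof. intros Ha. unfold ustarA2.
  set (s := sqrt (4 * a - 4 * a ^ 2 + 1)).
  assert (Hs2 : s * s = 4 * a - 4 * a ^ 2 + 1) by (unfold s; apply sqrt_sqrt; nra).
  assert (Hs0 : 0 <= s) by (unfold s; apply sqrt_pos).
  assert (Hd : 0 < 2 * (1 - a) ^ 2) by nra.
  apply (Rmult_lt_reg_r (2 * (1 - a) ^ 2)); auto.
  unfold Rdiv. rewrite Rmult_assoc, Rinv_l by lra. rewrite Rmult_1_r.
  destruct (Rle_dec a (1/2)).
  - assert (s <= 3/2) by nra. nra.
  - set (e := 1 - a). assert (He : 0 < e < 1/2) by (unfold e; lra).
    replace a with (1 - e) in * by (unfold e; ring).
    destruct (Rle_dec (1 - 18*e^2) 0).
    + nra.
    +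
      assert (Ht : 0 < 1 - 2*e) by lra.
      assert (((1-2*e)*s)^2 > (1 - 18*e^2)^2).
      { replace (((1-2*e)*s)^2) with ((1-2*e)^2 * (s*s)) by ring. rewrite Hs2.
        assert (e^2 < 1/18) by nra. 
        assert (0 < e^2) by nra.
        assert (0 < 5 + 8*e - 85*e^2) by lra.
        assert ((1 - 2*e)^2 * (4 * (1 - e) - 4 * (1 - e) ^ 2 + 1) - (1 - 18*e^2)^2
                = 4*e^2*(5 + 8*e - 85*e^2)) by ring.
        assert (0 < 4*e^2*(5 + 8*e - 85*e^2)) by (apply Rmult_lt_0_compat; lra).
        lra. }
      assert ((1-2*e)*s > 1 - 18*e^2).
      { apply Rnot_le_lt. intro Hc. 
        assert (0 <= (1-2*e)*s) by nra. 
        assert (((1-2*e)*s)^2 <= (1 - 18*e^2)^2) by (apply pow_incr; lra). lra. }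
      nra.
Qed.

Lemma ln_nonpos x : x <= 0 -> ln x = 0.
Proof. intros H. unfold ln. destruct (Rlt_dec _ x) as [h|h]; [exfalso; simpl in h; lra | reflexivity]. Qed.

Lemma gamma_lb a : 0 < a < 1 -> - a < gammaA2 a.
Proof. intros Ha. unfold gammaA2.
  set (r := sqrt (ustarA2 a)).
  assert (Hr0 : 0 <= r) by apply sqrt_pos.
  assert (Hr3 : r < 3).
  { unfold r. destruct (Rle_dec (ustarA2 a) 0).
    - rewrite sqrt_neg_0; [lra|auto].
    - replace 3 with (sqrt 9). apply sqrt_lt_1_alt. split. lra. apply ustar_lt9; auto.
      replace 9 with (3*3) by ring. apply sqrt_square; lra. }
  assert (Hk : 0 < / kappaA2 a) by (unfold kappaA2; apply Rinv_0_lt_compat, Rdiv_lt_0_compat; lra).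
  set (arg := (/ kappaA2 a * r + 1) / (r - 1)).
  destruct (Rle_dec arg 0).
  - rewrite ln_nonpos; auto. nra.
  - assert (Hr1 : 1 < r).
    { destruct (Rtotal_order r 1) as [H|[H|H]]; auto; exfalso.
      + apply n. unfold arg. assert (0 < / kappaA2 a * r + 1) by nra.
        assert (/ (r - 1) < 0) by (apply Rinv_lt_0_compat; lra).
        unfold Rdiv. nra.
      + apply n. unfold arg. rewrite H. replace (1-1) with 0 by ring. unfold Rdiv. rewrite Rinv_0. lra. }
    assert (Harg : 1/2 < arg).
    { unfold arg. apply (Rmult_lt_reg_r (r-1)). lra.
      set (K := / kappaA2 a) in *.
      replace ((K * r + 1) / (r - 1) * (r - 1)) with (K * r + 1) by (field; lra).
      assert (0 <= K * r) by nra. lra. }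
    assert (Hl : ln (1/2) < ln arg) by (apply ln_increasing; lra).
    assert (Hl2 : ln (1/2) = - ln 2). { unfold Rdiv. rewrite Rmult_1_l. apply ln_Rinv. lra. }
    assert (Hln2 : ln 2 < 1).
    { rewrite <- ln_exp with 1. apply ln_increasing. lra. generalize (exp_ineq1 1); lra. }
    nra.
Qed.

Lemma CC_pair0 t : CC (fun s => (0, s)) t.
Proof. split; cbn [fst snd]. apply rc_const. apply rc_id. Qed.

Lemma integrand_cont (al T x rho c th : R) :
  0 < al < 1 -> 0 < x -> al * PI < T + al * ln x -> 0 < rho ->
  rho <= al * (T + al * ln x) / 10 -> 0 < c ->
  CC (fun t => ((fA2 al T (u0A2 al T x + RtoC rho * Cexp (0, t))%C x
                 * Cexp (RtoC (- c) * (0, 1) * (u0A2 al T x + RtoC rho * Cexp (0, t))%C))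
                * ((0, rho) * Cexp (0, t)))%C) th.
Proof.
  intros H1 H2 H3 H4 H5 H6.
  destruct (pointwise al T x rho c th H1 H2 H3 H4 H5 H6) as [N1 [N2 [N3 _]]].
  assert (HU : CC (fun t => (u0A2 al T x + RtoC rho * Cexp (0, t))%C) th).
  { apply CC_plus. apply CC_const. apply CC_mult. apply CC_const. apply CC_exp, CC_pair0. }
  assert (HS : CC (fun t => Csqrt (u0A2 al T x + RtoC rho * Cexp (0, t))%C) th).
  { apply CC_sqrt; auto. }
  apply CC_mult; [apply CC_mult|].
  - unfold fA2. apply CC_div; auto.
    + apply CC_mult. apply CC_mult. apply CC_const. apply CC_inv.
      apply CC_mult; auto. apply CC_const.
      apply Cmult_neq_0; auto. intro E; injection E; lra.
      apply CC_mult. apply CC_const. apply CC_exp. apply CC_minus; auto. apply CC_const.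
    + apply CC_plus. apply CC_exp. apply CC_div; auto. apply CC_minus; auto. apply CC_const.
      apply CC_const. intro E; injection E; lra. apply CC_const.
  - apply CC_exp. apply CC_mult; auto. apply CC_const.
  - apply CC_mult. apply CC_const. apply CC_exp, CC_pair0.
Qed.

Lemma normCR (z : C) : @norm R_AbsRing C_R_NormedModule z = Cmod z.
Proof. destruct z as [a b]. unfold Cmod. 
  change (@norm R_AbsRing C_R_NormedModule (a,b)) with (@prod_norm R_AbsRing R_NormedModule R_NormedModule (a,b)).
  unfold prod_norm. cbn [fst snd].
  change (@norm R_AbsRing R_NormedModule a) with (Rabs a).
  change (@norm R_AbsRing R_NormedModule b) with (Rabs b).
  rewrite !pow2_abs. reflexivity. Qed.

Theorem lemmaA2 :
  forall n : nat, (1 <= n)%nat ->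
  exists C0 : R, exists N0bar : R, 0 < N0bar /\ exists T0 : R,
  forall N0 : R, N0bar <= N0 ->
  forall (alpha sigma : R) (N1 : nat),
    0 < alpha < 1 -> 0 < sigma -> (1 <= N1)%nat ->
    T0 <= TA2 alpha sigma N1 ->
  forall x : R, UpsilonA2 alpha sigma N1 x ->
  forall rho : R, 0 < rho <= rho0A2 alpha sigma N0 ->
  forall s : R, (s = 1 \/ s = -1) ->
    let h := hA2 alpha sigma in
    let T := TA2 alpha sigma N1 in
    Cmod (circ_int
            (fun u => (fA2 alpha T u x
                       * Cexp (RtoC (- (2 * INR n * PI / h)) * (0, 1) * u))%C)
            (u0A2 alpha T x) rho s)
    <= C0 * (exp ((rho - aA2 alpha T x) * (2 * INR n * PI / h)) * Rpower x alpha).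
Proof.
  intros n Hn. exists 30, 10. split; [lra|]. exists 0.
  intros N0 HN0 al sigma N1 Hal Hsig HN1 HT0 x Hx rho Hrho s Hs.
  cbv zeta.
  unfold UpsilonA2 in Hx. cbv zeta in Hx. destruct Hx as [[Hxs Hx1] Hup].
  set (T := TA2 al sigma N1) in *.
  set (h := hA2 al sigma) in *.
  assert (HPI : 3 < PI) by (generalize PI2_3_2; lra).
  assert (Hx0 : 0 < x) by (eapply Rlt_le_trans; [|apply Hxs]; unfold xstarA2; apply exp_pos).
  assert (Hlx : / al * (gammaA2 al - T) <= ln x).
  { unfold xstarA2 in Hxs. rewrite <- (ln_exp (/ al * (gammaA2 al - T))).
    destruct Hxs as [Hl|Hl]. left; apply ln_increasing; auto. apply exp_pos. rewrite Hl; lra. }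
  set (p := T + al * ln x) in *.
  assert (Hpg : gammaA2 al <= p).
  { unfold p. assert (al * (/ al * (gammaA2 al - T)) <= al * ln x) by (apply Rmult_le_compat_l; lra).
    replace (al * (/ al * (gammaA2 al - T))) with (gammaA2 al - T) in H by (field; lra). lra. }
  generalize (gamma_lb al Hal); intros Hg.
  assert (Hh : 0 < h) by (unfold h, hA2; apply Rmult_lt_0_compat; apply pow_lt; lra).
  assert (HM : sigma^2/2 <= M0A2 sigma) by (unfold M0A2; generalize (Rmax_l (sigma ^ 2 / 4) (Rmax (1 + Rceil (9 * PI ^ 2 / sigma ^ 2)) (2 * Rceil ((1 + sqrt (PI / sigma)) ^ 4)))); lra).
  assert (Hp2 : al^2 * PI^2 + sigma^2/2 * h < p^2).
  { assert (sigma^2/2 * h <= M0A2 sigma * h) by (apply Rmult_le_compat_r; lra). lra. }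
  assert (Hpa : al * PI < p).
  { apply Rnot_le_lt. intro Hle.
    assert (0 <= sigma^2/2*h) by (apply Rmult_le_pos; [|lra]; generalize (pow2_ge_0 sigma); lra).
    assert (-(al*PI) < p) by nra. nra. }
  assert (Hps : sigma^2 * al / 2 <= p).
  { apply sq_le. nra. unfold h, hA2 in Hp2.
    assert (0 <= al^2*PI^2) by nra.
    replace ((sigma^2*al/2)^2) with (sigma^2/4 * (sigma^2 * al^2)) by field.
    assert (sigma^2/4 * (sigma^2 * al^2) <= sigma^2/2 * (sigma^2 * al^2)).
    { apply Rmult_le_compat_r. nra. nra. }
    lra. }
  assert (Hr0 : rho0A2 al sigma N0 <= h / N0 / 2).
  { unfold rho0A2. fold h. generalize (Rmin_r (al ^ 2 * PI ^ 2) (Rmin (2 * PI * al * gammaA2 al) (h / N0)))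
      (Rmin_r (2 * PI * al * gammaA2 al) (h / N0)). lra. }
  assert (Hrho2 : rho <= al * p / 10).
  { apply Rle_trans with (h / N0 / 2). lra.
    apply Rle_trans with (h / 10 / 2).
    { apply Rmult_le_compat_r. lra. unfold Rdiv. apply Rmult_le_compat_l. lra.
      apply Rinv_le_contravar; lra. }
    unfold h, hA2. nra. }
  set (c := 2 * INR n * PI / h).
  assert (Hc : 0 < c).
  { unfold c. apply Rdiv_lt_0_compat; auto. assert (1 <= INR n) by (apply (le_INR 1); auto). nra. }
  unfold circ_int.
  set (g := fun th : R => ((fA2 al T (u0A2 al T x + RtoC rho * Cexp (0, th))%C x
                 * Cexp (RtoC (- c) * (0, 1) * (u0A2 al T x + RtoC rho * Cexp (0, th))%C))
                * ((0, rho) * Cexp (0, th)))%C).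
  change (Cmod (RInt (V := C_R_CompleteNormedModule) g 0 (s * (2 * PI))) <=
          30 * (exp ((rho - aA2 al T x) * c) * Rpower x al)).
  assert (Hex : ex_RInt (V := C_R_CompleteNormedModule) g 0 (s * (2 * PI))).
  { apply ex_RInt_continuous. intros z _. apply CC_cont.
    apply (integrand_cont al T x rho c z); auto; lra. }
  assert (K := norm_RInt_le_const_abs (V := C_R_NormedModule) g 0 (s * (2 * PI))
       (RInt (V := C_R_CompleteNormedModule) g 0 (s * (2 * PI)))
       (3 * Rpower x al * exp ((rho - aA2 al T x) * c))).
  assert (K2 : Cmod (RInt (V := C_R_CompleteNormedModule) g 0 (s * (2 * PI))) <=
     Rabs (s * (2 * PI) - 0) * (3 * Rpower x al * exp ((rho - aA2 al T x) * c))).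
  { rewrite <- normCR. apply K.
    - intros z _. rewrite normCR.
      destruct (pointwise al T x rho c z) as [_ [_ [_ K']]]; auto; lra.
    - apply (RInt_correct (V := C_R_CompleteNormedModule)). exact Hex. }
  eapply Rle_trans; [exact K2|].
  assert (Habs : Rabs (s * (2 * PI) - 0) = 2 * PI).
  { destruct Hs; subst s; [rewrite Rabs_right|rewrite Rabs_left]; lra. }
  rewrite Habs.
  assert (0 < exp ((rho - aA2 al T x) * c) * Rpower x al).
  { apply Rmult_lt_0_compat; [apply exp_pos | unfold Rpower; apply exp_pos]. }
  generalize PI_4. nra.
Qed.
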